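(* Let $F$ be an infinite field of characteristic $p>2$ and $k$ a positive integer. Then $E^{k^\ast}$ satisfies the $\mathbb{Z}$-graded identity $x^p$ for every variable $x$ of degree $\alpha(x)\neq 0$.
   Context: $L$ is a vector space over $F$ with basis $e_1,e_2,\dots$, $E$ its unital Grassmann algebra (basis $1$ and $e_{i_1}\cdots e_{i_k}$, $i_1<\cdots<i_k$, with $e_ie_j=-e_je_i$). $E^{k^\ast}$ is $E$ with the $\mathbb{Z}$-grading induced by $\|e_i\|=1$ for $i\le k$, $\|e_i\|=0$ for $i>k$, a basis monomial having degree the sum of the degrees of its factors and $1$ having degree $0$. A graded polynomial in variables with prescribed integer degrees $\alpha(x)$ is a graded identity of a $\mathbb{Z}$-graded algebra $A$ if it vanishes whenever each variable $x$ is replaced by an element of the homogeneous component $A_{\alpha(x)}$. *)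

(* Defs.v *)
From HB Require Import structures.
From mathcomp Require Import all_boot all_order all_algebra.
From mathcomp Require Import finmap.
Set Implicit Arguments. Unset Strict Implicit. Unset Printing Implicit Defensive.
Import Order.TTheory GRing.Theory Num.Theory.
Local Open Scope fset_scope.
Local Open Scope ring_scope.

(* Basis monomials of the Grassmann algebra E: e_{i_1}...e_{i_m} with
   i_1 < ... < i_m is encoded by the finite set {i_1-1,...,i_m-1} of
   natural numbers (generator e_i has index i-1; the empty set is 1). *)
Definition monomial := {fset nat}.

Definition gelt (F : fieldType) := monomial -> F.

Definition finsupp (F : fieldType) (x : gelt F) : Prop :=
  exists s : seq monomial, forall S, x S != 0 -> S \in s.

(* sign of reordering e_A * e_B (A, B disjoint) into increasing order *)
Definition inversions (A B : monomial) : nat :=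
  (\sum_(i <- A) \sum_(j <- B) (j < i)%N)%N.

Definition gmul (F : fieldType) (x y : gelt F) : gelt F :=
  fun S => \sum_(A <- fpowerset S)
             (-1) ^+ inversions A (S `\` A) * x A * y (S `\` A).

Definition gone (F : fieldType) : gelt F :=
  fun S => if S == fset0 then 1 else 0.

Definition gpow (F : fieldType) (x : gelt F) (n : nat) : gelt F :=
  iter n (gmul x) (gone F).

(* Z-grading of E^{k*}: ||e_i|| = 1 for i <= k (index i-1 < k), 0 otherwise *)
Definition kdeg (k : nat) (S : monomial) : int :=
  (#|` [fset i in S | (i < k)%N]|)%:Z.

Definition homog (F : fieldType) (k : nat) (d : int) (x : gelt F) : Prop :=
  finsupp x /\ forall S, x S != 0 -> kdeg k S = d.

(* Main.v *)
Require Import Defs.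
From HB Require Import structures.
From mathcomp Require Import all_boot all_order all_algebra.
From mathcomp Require Import finmap ring.
From Stdlib Require Import FunctionalExtensionality.
Set Implicit Arguments. Unset Strict Implicit. Unset Printing Implicit Defensive.
Import Order.TTheory GRing.Theory Num.Theory.
Local Open Scope fset_scope.
Local Open Scope ring_scope.

Lemma sumn_fsetU (T : choiceType) (A B : {fset T}) (f : T -> nat) :
  [disjoint A & B] ->
  (\sum_(i <- A `|` B) f i = \sum_(i <- A) f i + \sum_(i <- B) f i)%N.
Proof.
move=> dAB; rewrite (big_fsetID _ (mem A)) /=; congr (_ + _)%N.
  apply: eq_fbigl => i; rewrite !inE /=; by case: (i \in A); rewrite /= ?andbT ?andbF.
apply: eq_fbigl => i; rewrite !inE /=.
case iA: (i \in A) => /=; last by rewrite andbT.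
by apply/esym/negP => iB; move/fdisjointP: dAB => /(_ i iA); rewrite iB.
Qed.

Lemma inv_Ul (A B C : monomial) : [disjoint A & B] ->
  inversions (A `|` B) C = (inversions A C + inversions B C)%N.
Proof. by move=> d; rewrite /inversions sumn_fsetU. Qed.

Lemma inv_Ur (A B C : monomial) : [disjoint B & C] ->
  inversions A (B `|` C) = (inversions A B + inversions A C)%N.
Proof.
move=> d; rewrite /inversions -big_split /=; apply: eq_bigr => i _.
by rewrite sumn_fsetU.
Qed.

Lemma inv_sym (A B : monomial) : [disjoint A & B] ->
  (inversions A B + inversions B A = #|` A| * #|` B|)%N.
move=> d; rewrite /inversions [X in (_ + X)%N]exchange_big /= -big_split /=.
rewrite card_fset_sum1 big_distrl /=; apply: eq_big_seq => i iA.
rewrite -big_split /= card_fset_sum1 big_distrr /=; apply: eq_big_seq => j jB.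
have : i != j by apply: contraTneq jB => <-; move/fdisjointP: d; apply.
rewrite muln1; case: ltngtP => //.
Qed.

Lemma fsum_bij (R : zmodType) (T U : choiceType) (X : {fset T}) (Y : {fset U})
  (P : pred T) (Q : pred U) (f : T -> U) (g : U -> T) (Fx : T -> R) (Gy : U -> R) :
  (forall a, a \in X -> P a -> [/\ f a \in Y, Q (f a), g (f a) = a & Gy (f a) = Fx a]) ->
  (forall b, b \in Y -> Q b -> [/\ g b \in X, P (g b) & f (g b) = b]) ->
  \sum_(a <- X | P a) Fx a = \sum_(b <- Y | Q b) Gy b.
Proof.
move=> H1 H2; rewrite -big_filter -[RHS]big_filter.
transitivity (\sum_(b <- map f [seq a <- X | P a]) Gy b).
  rewrite big_map; apply: eq_big_seq => a; rewrite mem_filter => /andP[Pa Xa].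
  by case: (H1 a Xa Pa).
apply: perm_big; apply: uniq_perm.
- rewrite map_inj_in_uniq ?filter_uniq ?fset_uniq //.
  move=> a b; rewrite !mem_filter => /andP[Pa Xa] /andP[Pb Xb] fab.
  case: (H1 a Xa Pa) => _ _ <- _; case: (H1 b Xb Pb) => _ _ <- _; by rewrite fab.
- by rewrite filter_uniq ?fset_uniq.
move=> b; rewrite mem_filter; apply/mapP/idP.
  move=> [a]; rewrite mem_filter => /andP[Pa Xa] ->.
  by case: (H1 a Xa Pa) => -> -> _ _.
move=> /andP[Qb Yb]; case: (H2 b Yb Qb) => gX gP fg.
by exists (g b) => //; rewrite mem_filter gP gX.
Qed.

Section G.
Variable F : fieldType.
Implicit Types x y z : gelt F.

Definition gadd x y : gelt F := fun S => x S + y S.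
Definition gscal (c : F) x : gelt F := fun S => c * x S.
Definition gzero : gelt F := fun _ => 0.

Lemma gmulDl x y z : gmul (gadd x y) z = gadd (gmul x z) (gmul y z).
Proof.
apply: functional_extensionality => S; rewrite /gmul /gadd -big_split /=.
by apply: eq_bigr => A _; ring.
Qed.

Lemma gmulDr x y z : gmul x (gadd y z) = gadd (gmul x y) (gmul x z).
Proof.
apply: functional_extensionality => S; rewrite /gmul /gadd -big_split /=.
by apply: eq_bigr => A _; ring.
Qed.

Lemma gmulZl c x y : gmul (gscal c x) y = gscal c (gmul x y).
Proof.
apply: functional_extensionality => S; rewrite /gmul /gscal mulr_sumr.
by apply: eq_bigr => A _; ring.
Qed.

Lemma gmulZr c x y : gmul x (gscal c y) = gscal c (gmul x y).
Proof.
apply: functional_extensionality => S; rewrite /gmul /gscal mulr_sumr.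
by apply: eq_bigr => A _; ring.
Qed.

Lemma gmul0r x : gmul gzero x = gzero.
Proof.
apply: functional_extensionality => S; rewrite /gmul /gzero big1 // => A _.
by rewrite mulr0 mul0r.
Qed.

Lemma gmulr0 x : gmul x gzero = gzero.
Proof.
apply: functional_extensionality => S; rewrite /gmul /gzero big1 // => A _.
by rewrite mulr0.
Qed.

Lemma inv0l (A : monomial) : inversions fset0 A = 0%N.
Proof. by rewrite /inversions big_seq_fset0. Qed.

Lemma inv0r (A : monomial) : inversions A fset0 = 0%N.
Proof. by rewrite /inversions big1 // => i _; rewrite big_seq_fset0. Qed.

Lemma gmul1r x : gmul x (gone F) = x.
Proof.
apply: functional_extensionality => S; rewrite /gmul.
rewrite (big_fsetD1 S) ?fpowersetE ?fsubset_refl //= big1_fset.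
  by rewrite fsetDv inv0r /gone eqxx expr0 mul1r mulr1 addr0.
move=> A; rewrite !inE fpowersetE => /andP[AS SA] _; rewrite /gone.
case: eqP; last by rewrite mulr0.
move/eqP; rewrite fsetD_eq0 => SsA; case/negP: AS.
by rewrite eqEfsubset SA SsA.
Qed.

Lemma gmul1l x : gmul (gone F) x = x.
Proof.
apply: functional_extensionality => S; rewrite /gmul.
rewrite (big_fsetD1 fset0) ?fpowersetE ?fsub0set //= big1_fset.
  by rewrite fsetD0 inv0l /gone eqxx expr0 !mul1r addr0.
move=> A; rewrite !inE => /andP[A0 _] _; rewrite /gone.
by rewrite (negPf A0) mulr0 mul0r.
Qed.

Notation sg A B := ((-1) ^+ inversions A B : F).

Lemma assoc_term x y z (S A C : monomial) : A `<=` C -> C `<=` S ->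
  sg A (S `\` A) * x A * (sg (C `\` A) ((S `\` A) `\` (C `\` A)) * y (C `\` A)
     * z ((S `\` A) `\` (C `\` A)))
  = sg C (S `\` C) * (sg A (C `\` A) * x A * y (C `\` A)) * z (S `\` C).
Proof.
move=> AC CS.
have e1 : (S `\` A) `\` (C `\` A) = S `\` C.
  apply/fsetP => i; rewrite !inE; move: (fsubsetP AC i) (fsubsetP CS i).
  by case: (i \in A); case: (i \in C); case: (i \in S) => //= H1 H2; solve [move: (H1 isT) => // | move: (H2 isT) => //].
have e2 : S `\` A = (C `\` A) `|` (S `\` C).
  apply/fsetP => i; rewrite !inE; move: (fsubsetP AC i) (fsubsetP CS i).
  by case: (i \in A); case: (i \in C); case: (i \in S) => //= H1 H2; solve [move: (H1 isT) => // | move: (H2 isT) => //].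
have e3 : C = A `|` (C `\` A).
  apply/fsetP => i; rewrite !inE; move: (fsubsetP AC i) (fsubsetP CS i).
  by case: (i \in A); case: (i \in C); case: (i \in S) => //= H1 H2; solve [move: (H1 isT) => // | move: (H2 isT) => //].
have d1 : [disjoint C `\` A & S `\` C].
  by apply/fdisjointP => i; rewrite !inE => /andP[_ ->].
have d2 : [disjoint A & C `\` A].
  by apply/fdisjointP => i iA; rewrite !inE iA.
have h1 : inversions A (S `\` A) = (inversions A (C `\` A) + inversions A (S `\` C))%N.
  by rewrite e2 inv_Ur.
have h2 : inversions C (S `\` C) = (inversions A (S `\` C) + inversions (C `\` A) (S `\` C))%N.
  by rewrite {1}e3 inv_Ul.
rewrite e1 h1 h2 !exprD; ring.
Qed.

Lemma gmulA x y z : gmul x (gmul y z) = gmul (gmul x y) z.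
Proof.
apply: functional_extensionality => S; rewrite /gmul.
transitivity (\sum_(A <- fpowerset S) \sum_(B <- fpowerset S | [disjoint B & A]%fset)
   sg A (S `\` A) * x A * (sg B ((S `\` A) `\` B) * y B * z ((S `\` A) `\` B))).
  apply: eq_big_seq => A AS; rewrite mulr_sumr; apply: eq_fbigl_cond => B.
  by rewrite !inE /= fpowersetCE fpowersetE andbT.
transitivity (\sum_(C <- fpowerset S) \sum_(A <- fpowerset S)
   (if A `<=` C then sg C (S `\` C) * (sg A (C `\` A) * x A * y (C `\` A)) * z (S `\` C) else 0)).
  rewrite exchange_big /=; apply: eq_big_seq => A AS; rewrite -big_mkcond /=.
  rewrite fpowersetE in AS.
  apply: (fsum_bij (f := fun B => A `|` B) (g := fun C => C `\` A)).
  - move=> B; rewrite fpowersetE => BS dBA; split.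
    + by rewrite fpowersetE fsubUset AS BS.
    + exact: fsubsetUl.
    + apply/fsetP => i; rewrite !inE; case iA: (i \in A) => /=.
        by apply/esym/negP => iB; move/fdisjointP: dBA => /(_ i iB); rewrite iA.
      by [].
    + rewrite -(assoc_term x y z (fsubsetUl A B)); last by rewrite fsubUset AS BS.
      have -> : (A `|` B) `\` A = B.
        apply/fsetP => i; rewrite !inE; case iB: (i \in B); rewrite /= ?orbF ?andNb //.
        by rewrite orbT andbT; apply/negP => iA; move/fdisjointP: dBA => /(_ i iB); rewrite iA.
      by [].
  - move=> C; rewrite fpowersetE => CS AC; split.
    + by rewrite fpowersetE; apply: fsubset_trans (fsubsetDl _ _) CS.
    + by apply/fdisjointP => i; rewrite !inE => /andP[].
    + apply/fsetP => i; rewrite !inE; move: (fsubsetP AC i).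
      by case: (i \in A); case: (i \in C) => //= H; move: (H isT).
apply: eq_big_seq => C; rewrite fpowersetE => CS.
rewrite -big_mkcond /= mulr_sumr mulr_suml; apply: eq_fbigl_cond => A.
rewrite !inE /= !fpowersetE andbT; apply/andP/idP => [[] //|AC].
by split => //; apply: fsubset_trans AC CS.
Qed.

Lemma sign_sq (n : nat) : (-1) ^+ n * (-1) ^+ n = 1 :> F.
Proof. by rewrite -exprD addnn -mul2n exprM sqrrN !expr1n. Qed.

Lemma gmul_swap x y (S : monomial) : gmul y x S =
  \sum_(A <- fpowerset S) (-1) ^+ (#|` A| * #|` (S `\` A)|) * sg A (S `\` A) * x A * y (S `\` A).
Proof.
rewrite /gmul; apply: (fsum_bij (f := fun B => S `\` B) (g := fun B => S `\` B)).
- move=> B; rewrite fpowersetE => BS _; rewrite fsetDK //; split => //.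
  + by rewrite fpowersetE fsubsetDl.
  + have := inv_sym (A := B) (B := S `\` B).
    have d : [disjoint B & S `\` B] by apply/fdisjointP => i iB; rewrite !inE iB.
    move=> /(_ d) h; rewrite mulnC -h exprD.
    have := sign_sq (inversions (S `\` B) B).
    set u := (_ ^+ inversions (S `\` B) B); set v := (_ ^+ inversions B _).
    move=> uu; transitivity ((u * u) * v * y B * x (S `\` B)); first by ring.
    by rewrite uu mul1r.
- move=> B; rewrite fpowersetE => BS _; rewrite fsetDK //; split => //.
  by rewrite fpowersetE fsubsetDl.
Qed.

Definition even_supp x := forall A, x A != 0 -> ~~ odd #|` A|.
Definition odd_supp x := forall A, x A != 0 -> odd #|` A|.

Lemma gmul_even_comm x y : even_supp x -> gmul y x = gmul x y.
Proof.
move=> ex; apply: functional_extensionality => S; rewrite gmul_swap /gmul.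
apply: eq_bigr => A _; case: (eqVneq (x A) 0) => [->|/ex]; first by rewrite !mulr0 !mul0r.
by rewrite -signr_odd oddM => /negPf ->; rewrite expr0 mul1r.
Qed.

Lemma gmul_odd_anti x : (2%:R : F) != 0 -> odd_supp x -> gmul x x = gzero.
Proof.
move=> two ox; apply: functional_extensionality => S.
have h : gmul x x S = - gmul x x S.
  rewrite {1}gmul_swap /gmul -sumrN; apply: eq_bigr => A _.
  case: (eqVneq (x A) 0) => [->|/ox oA]; first by rewrite !mulr0 !mul0r oppr0.
  case: (eqVneq (x (S `\` A)) 0) => [->|/ox oB]; first by rewrite !mulr0 oppr0.
  by rewrite -signr_odd oddM oA oB expr1 mulN1r !mulNr.
move/eqP: h; rewrite -subr_eq0 opprK -mulr2n -mulr_natr mulf_eq0 (negPf two) orbF.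
by move/eqP.
Qed.


Lemma gpowS x n : gpow x n.+1 = gmul x (gpow x n). Proof. by []. Qed.

Lemma comm_pow (a b : gelt F) : gmul a b = gmul b a -> forall n,
  gmul b (gpow a n) = gmul (gpow a n) b.
Proof.
move=> ab; elim=> [|n IH] /=; first by rewrite gmul1r gmul1l.
by rewrite gmulA -ab -gmulA IH gmulA.
Qed.

Lemma binom_sq (a b : gelt F) : gmul a b = gmul b a -> gmul b b = gzero -> forall n,
  gpow (gadd a b) n.+1 = gadd (gpow a n.+1) (gscal n.+1%:R (gmul (gpow a n) b)).
Proof.
move=> ab bb; elim=> [|n IH].
  rewrite /= !gmul1r gmul1l; apply: functional_extensionality => S.
  by rewrite /gadd /gscal mul1r.
have e1 : gmul a (gmul (gpow a n) b) = gmul (gpow a n.+1) b by rewrite gmulA.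
have e2 : gmul b (gpow a n.+1) = gmul (gpow a n.+1) b by rewrite comm_pow.
have e3 : gmul b (gmul (gpow a n) b) = gzero.
  by rewrite gmulA comm_pow // -gmulA bb gmulr0.
rewrite gpowS IH gmulDl !gmulDr !gmulZr e1 e2 e3 -gpowS.
apply: functional_extensionality => S; rewrite /gadd /gscal /gzero /=.
rewrite [n.+2%:R]mulrSr; ring.
Qed.

Lemma pow_kill (a b : gelt F) n : (n.+1%:R : F) = 0 ->
  gmul a b = gmul b a -> gmul b b = gzero ->
  gpow (gadd a b) n.+1 = gpow a n.+1.
Proof.
move=> p0 ab bb; rewrite binom_sq // p0; apply: functional_extensionality => S.
by rewrite /gadd /gscal mul0r addr0.
Qed.

Lemma gpow0 n : gpow gzero n.+1 = gzero.
Proof. by rewrite gpowS gmul0r. Qed.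

Lemma even_pow_zero n : (n.+1%:R : F) = 0 -> forall (s : seq monomial) (y : gelt F),
  even_supp y -> y fset0 = 0 -> (forall S, y S != 0 -> S \in s) -> gpow y n.+1 = gzero.
Proof.
move=> p0; elim=> [|A s IH] y ey y0 ys.
  have -> : y = gzero; last exact: gpow0.
  apply: functional_extensionality => S; rewrite /gzero.
  by case: (eqVneq (y S) 0) => // /ys.
pose y' : gelt F := fun S => if S == A then 0 else y S.
pose b : gelt F := fun S => if S == A then y A else 0.
have -> : y = gadd y' b.
  apply: functional_extensionality => S; rewrite /gadd /y' /b.
  by case: (eqVneq S A) => [->|_]; rewrite ?add0r ?addr0.
have eb : even_supp b.
  move=> S; rewrite /b; case: (eqVneq S A) => [->|_]; [exact: ey | by rewrite eqxx].
rewrite pow_kill //.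
- apply: IH.
  + move=> S; rewrite /y'; case: (eqVneq S A) => [_|_]; [by rewrite eqxx | exact: ey].
  + by rewrite /y'; case: (eqVneq fset0 A).
  + move=> S; rewrite /y'; case: (eqVneq S A) => [_|SA /ys]; first by rewrite eqxx.
    by rewrite inE (negPf SA).
- by rewrite gmul_even_comm.
apply: functional_extensionality => S; rewrite /gmul /gzero big1 // => B _.
rewrite /b; case: (eqVneq B A) => [->|_]; last by rewrite mulr0 mul0r.
case: (eqVneq (S `\` A) A) => [SA|_]; last by rewrite mulr0.
have -> : A = fset0.
  apply/fsetP => i; rewrite inE; apply/negP => iA.
  by move: (iA); rewrite -{1}SA inE iA.
by rewrite y0 mulr0.
Qed.
End G.

Close Scope fset_scope.

Theorem mainTheorem5 (F : fieldType) (p k : nat)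
  (F_infinite : forall s : seq F, exists a : F, a \notin s)
  (charFp : p \in [pchar F]) (p_gt2 : (2 < p)%N) (k_gt0 : (0 < k)%N) :
  forall (d : int), d != 0 ->
  forall x : gelt F, homog k d x ->
  forall S : monomial, gpow x p S = 0.
Proof.
move=> d d0 x [[s xs] hx] S.
have x0 : x fset0 = 0.
  apply/eqP; apply: contraNT d0 => /hx <-; rewrite /kdeg.
  have -> : [fset i in (fset0 : monomial) | (i < k)%N]%fset = fset0%fset.
    by apply/fsetP => i; rewrite !inE.
  by rewrite cardfs0.
have two : (2%:R : F) != 0.
  rewrite -(dvdn_pcharf charFp); apply/negP => H.
  by have := dvdn_leq (isT : (0 < 2)%N) H; rewrite leqNgt p_gt2.
have p0 := pcharf0 charFp.
move: charFp p_gt2 p0; case: p => [|n] // _ _ p0.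
pose a : gelt F := fun S => if odd #|` S|%fset then 0 else x S.
pose b : gelt F := fun S => if odd #|` S|%fset then x S else 0.
have -> : x = gadd a b.
  apply: functional_extensionality => T; rewrite /gadd /a /b.
  by case: ifP; rewrite ?add0r ?addr0.
have ea : even_supp a by move=> T; rewrite /a; case: ifP => //; rewrite eqxx.
have ob : odd_supp b by move=> T; rewrite /b; case: ifP => //; rewrite eqxx.
have a0 : a fset0 = 0 by rewrite /a ?x0 ?if_same.
have as_ : forall T, a T != 0 -> T \in s.
  move=> T; rewrite /a; case: ifP; first by rewrite eqxx.
  by move=> _ /xs.
have ab : gmul a b = gmul b a by symmetry; apply: gmul_even_comm.
rewrite (pow_kill p0 ab (gmul_odd_anti two ob)).
by rewrite (even_pow_zero p0 ea a0 as_).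
Qed.
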